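(* For $i=1,2$ let $G_i$ be a group acting by homeomorphisms on a space $X_i$. If a space $\mathfrak{B}$, together with a left action of $G_1$ and a right action of $G_2$ over maps $P_i:\mathfrak{B}\to X_i$, is an equivalence between the action groupoids $G_1\ltimes X_1$ and $G_2\ltimes X_2$, then $P_1:\mathfrak{B}\to X_1$ and $P_2:\mathfrak{B}\to X_2$ are covering maps.
   Context: All spaces are locally compact and metrizable. The action groupoid $G\ltimes X$ consists of pairs $(g,x)$ with origin $x$, target $g(x)$ and product $(g,h(x))(h,x)=(gh,x)$. A $(\mathfrak{G},\mathfrak{H})$-equivalence between groupoids is a locally compact Hausdorff space $\mathfrak{B}$ with a free proper left action of $\mathfrak{G}$ over an open map $P_1:\mathfrak{B}\to\mathfrak{G}^{(0)}$ and a free proper right action of $\mathfrak{H}$ over an open map $P_2:\mathfrak{B}\to\mathfrak{H}^{(0)}$ (an action over $P$ is a continuous partially defined action $x\cdot h$, defined when $P(x)=\mathsf{t}(h)$, with $P(x\cdot h)=\mathsf{o}(h)$ and associativity; free means $x\cdot h=x$ forces $h$ to be a unit; proper means $(x,h)\mapsto(x,x\cdot h)$ is proper) such that the two actions commute and $P_1$, $P_2$ induce bijections $\mathfrak{B}/\mathfrak{H}\to\mathfrak{G}^{(0)}$ and $\mathfrak{G}\backslash\mathfrak{B}\to\mathfrak{H}^{(0)}$. Via $g\cdot x=(g,P_1(x))\cdot x$ and $x\cdot h=x\cdot(h^{-1},\ldots)$ such an equivalence yields commuting free proper actions of the groups $G_1$, $G_2$ on $\mathfrak{B}$. *)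

(* Defs.v *)
From HB Require Import structures.
From mathcomp Require Import all_boot all_order all_algebra.
From mathcomp Require Import all_classical all_reals all_analysis.

Set Implicit Arguments.
Unset Strict Implicit.
Unset Printing Implicit Defensive.

Import Order.TTheory GRing.Theory Num.Theory.
Local Open Scope classical_set_scope.

Definition is_group {G : Type} (mul : G -> G -> G) (one : G) (inv : G -> G) :=
  [/\ (forall a b c, mul a (mul b c) = mul (mul a b) c),
      (forall a, mul one a = a), (forall a, mul a one = a),
      (forall a, mul (inv a) a = one) & (forall a, mul a (inv a) = one)].

Definition action_by_homeos {G : Type} {X : topologicalType}
  (mul : G -> G -> G) (one : G) (act : G -> X -> X) :=
  [/\ (forall x, act one x = x),
      (forall g h x, act (mul g h) x = act g (act h x)) &
      (forall g, continuous (act g))].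

Definition open_map {E X : topologicalType} (f : E -> X) :=
  forall A : set E, open A -> open (f @` A).

Definition covering_map {E X : topologicalType} (p : E -> X) :=
  [/\ continuous p, (forall x, exists e, p e = x) &
   forall x : X, exists U : set X, [/\ open U, U x &
     exists (I : Type) (V : I -> set E),
       [/\ (forall i, open (V i)),
           (forall i j, i <> j -> V i `&` V j = set0),
           p @^-1` U = \bigcup_i V i &
           forall i, [/\ (forall a b, V i a -> V i b -> p a = p b -> a = b),
                         p @` V i = U &
                         (forall W : set E, open W -> open (p @` (W `&` V i)))]]]].

(* Left action of the action groupoid G |x X (G discrete, arrows (g,x) with
   origin x and target g x) on B over P.  Since an arrow with origin P b is
   determined by its group component, the partial action is encoded by
   L g b := (g, P b) . b; the fibred product G|xX *_{o,P} B is homeomorphic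
   to G * B via ((g, P b), b) <-> (g, b). *)
Definition groupoid_left_action {G : discreteTopologicalType}
  {X B : topologicalType} (mul : G -> G -> G) (one : G) (act : G -> X -> X)
  (P : B -> X) (L : G -> B -> B) :=
  [/\ (forall g, continuous (L g)),
      (forall g b, P (L g b) = act g (P b)),
      (forall g h b, L g (L h b) = L (mul g h) b) &
      (forall b, L one b = b)].

Definition groupoid_left_action_free {G : Type} {B : Type} (one : G)
  (L : G -> B -> B) := forall g b, L g b = b -> g = one.

Definition groupoid_left_action_proper {G : discreteTopologicalType}
  {B : topologicalType} (L : G -> B -> B) :=
  forall K : set (B * B), compact K ->
    compact [set gb : G * B | K (L gb.1 gb.2, gb.2)].

(* Right action of the action groupoid G |x X on B over P.  An arrow h with
   target P b is h = (k, act (inv k) (P b)); the partial action is encoded by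
   R b k := b . (k, act (inv k) (P b)). *)
Definition groupoid_right_action {G : discreteTopologicalType}
  {X B : topologicalType} (mul : G -> G -> G) (one : G) (inv : G -> G)
  (act : G -> X -> X) (P : B -> X) (R : B -> G -> B) :=
  [/\ (forall k, continuous (fun b => R b k)),
      (forall b k, P (R b k) = act (inv k) (P b)),
      (forall b k k', R (R b k) k' = R b (mul k k')) &
      (forall b, R b one = b)].

Definition groupoid_right_action_free {G : Type} {B : Type} (one : G)
  (R : B -> G -> B) := forall b k, R b k = b -> k = one.

Definition groupoid_right_action_proper {G : discreteTopologicalType}
  {B : topologicalType} (R : B -> G -> B) :=
  forall K : set (B * B), compact K ->
    compact [set bk : B * G | K (bk.1, R bk.1 bk.2)].

Definition action_groupoid_equivalence
  {G1 G2 : discreteTopologicalType} {X1 X2 B : topologicalType}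
  (mul1 : G1 -> G1 -> G1) (one1 : G1) (act1 : G1 -> X1 -> X1)
  (mul2 : G2 -> G2 -> G2) (one2 : G2) (inv2 : G2 -> G2)
  (act2 : G2 -> X2 -> X2)
  (P1 : B -> X1) (P2 : B -> X2) (L : G1 -> B -> B) (R : B -> G2 -> B) :=
  [/\ [/\ continuous P1, open_map P1, continuous P2 & open_map P2],
      [/\ groupoid_left_action mul1 one1 act1 P1 L,
          groupoid_left_action_free one1 L &
          groupoid_left_action_proper L],
      [/\ groupoid_right_action mul2 one2 inv2 act2 P2 R,
          groupoid_right_action_free one2 R &
          groupoid_right_action_proper R],
      [/\ (forall g b k, L g (R b k) = R (L g b) k),
          (forall g b, P2 (L g b) = P2 b) &
          (forall b k, P1 (R b k) = P1 b)] &
      (* P1, P2 induce bijections B/H -> X1 and G\B -> X2 *)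
      [/\ (forall x, exists b, P1 b = x),
          (forall b b', P1 b = P1 b' -> exists k, b' = R b k),
          (forall y, exists b, P2 b = y) &
          (forall b b', P2 b = P2 b' -> exists g, b' = L g b)]].

(* Main.v *)
Require Import Defs.
From HB Require Import structures.
From mathcomp Require Import all_boot all_order all_algebra.
From mathcomp Require Import all_classical all_reals all_analysis.
Local Open Scope classical_set_scope.

Lemma loc_disc (G : discreteTopologicalType) (B : topologicalType)
  (one : G) (A : B -> G -> B) :
  hausdorff_space B -> locally_compact [set: B] ->
  (forall k, continuous (A^~ k)) ->
  (forall b k, A b k = b -> k = one) ->
  (forall C : set B, compact C -> compact [set k | exists b, C b /\ C (A b k)]) ->
  forall b, exists V : set B, [/\ open V, V b &
     forall x x' k, V x -> V x' -> A x k = x' -> k = one].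
Proof.
move=> hB lcB cA fr pr b.
have [C nC [cC _]] := lcB b I.
rewrite withinET in nC.
set T := [set k | exists b, C b /\ C (A b k)].
have cT : compact T := pr C cC.
have := (iffLR (compact_near_coveringP T)) cT (B * B)%type
  (filter_prod (nbhs b) (nbhs b)) (fun p k => k = one \/ A p.1 k <> p.2) _.
case.
- move=> k Tk.
  have [->|kn1] := pselect (k = one).
    exists ([set one], setT); first by split; [exact: discrete_set1|exact: filterT].
    by move=> [k' p] /= [-> _]; left.
  have hne : A b k != b by apply/eqP => /fr.
  move: hB; rewrite open_hausdorff => /(_ _ _ hne) hh.
  case: hh => Q12p [Q1b Q2b] [oQ1 oQ2 /eqP Q12].
  case: Q12p Q1b Q2b oQ1 oQ2 Q12 => Q1 Q2 /= Q1b Q2b oQ1 oQ2 Q12.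
  rewrite inE in Q1b; rewrite inE in Q2b.
  exists ([set k], (A^~ k @^-1` Q1) `*` Q2); first split.
  + exact: discrete_set1.
  + exists (A^~ k @^-1` Q1, Q2) => //; split.
    * apply: (cA k b). exact: open_nbhs_nbhs.
    * exact: open_nbhs_nbhs.
  + move=> [k' [x x']] /= [-> [Qx Qx']]; right => /= e.
    have : (Q1 `&` Q2) x' by split => //; rewrite -e.
    by rewrite Q12.
- move=> [V1 V2] /= [nV1 nV2] sub.
  exists (interior (C `&` V1 `&` V2)); split.
  + exact: open_interior.
  + by rewrite /interior /=; apply: filterI => //; apply: filterI.
  + move=> x x' k /interior_subset [[Cx V1x] V2x] /interior_subset [[Cx' V1x'] V2x'] e.
    have Tk : T k by exists x; rewrite e.
    by case: (sub (x, x') (conj V1x V2x') k Tk).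
Qed.

Lemma cover_gen (G : discreteTopologicalType) (B X : topologicalType)
  (mul : G -> G -> G) (one : G) (inv : G -> G) (P : B -> X) (A : B -> G -> B) :
  is_group mul one inv -> hausdorff_space B -> locally_compact [set: B] ->
  continuous P -> open_map P ->
  (forall k, continuous (A^~ k)) -> (forall b k, P (A b k) = P b) ->
  (forall b k k', A (A b k) k' = A b (mul k k')) -> (forall b, A b one = b) ->
  (forall b k, A b k = b -> k = one) ->
  (forall C : set B, compact C -> compact [set k | exists b, C b /\ C (A b k)]) ->
  (forall x, exists b, P b = x) -> (forall b b', P b = P b' -> exists k, b' = A b k) ->
  covering_map P.
Proof.
move=> [mA m1 m1r mV mVr] hB lcB cP oP cA PA AA A1 fr pr sP fib.
have AVK y k : A (A y (inv k)) k = y by rewrite AA mV A1.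
have AKV y k : A (A y k) (inv k) = y by rewrite AA mVr A1.
split => // x.
have [b Pb] := sP x.
have [V [oV Vb Vd]] := @loc_disc _ _ one A hB lcB cA fr pr b.
exists (P @` V); split.
- exact: oP.
- by exists b.
exists G, (fun k => [set y | V (A y (inv k))]); split.
- move=> k; apply: open_comp => //; move=> y _; exact: cA.
- move=> i j ij; apply/seteqP; split => // y [/= Vi Vj]; exfalso; apply: ij.
  have e : A (A y (inv i)) (mul i (inv j)) = A y (inv j).
    by rewrite AA mA mV m1.
  have := Vd _ _ _ Vi Vj e => e1.
  by have := congr1 (mul^~ j) e1; rewrite -mA mV m1r m1.
- apply/seteqP; split => y.
  + move=> [v Vv Pv]; have [k ->] := fib v y Pv.
    by exists k => //=; rewrite AKV.
  + move=> [k _ /= Vk]; exists (A y (inv k)) => //; exact: PA.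
- move=> i; split.
  + move=> a a' /= Va Va' Pa; have [k ek] := fib a a' Pa.
    have e : A (A a (inv i)) (mul i (mul k (inv i))) = A a' (inv i).
      by rewrite ek !AA mA mV m1.
    have := Vd _ _ _ Va Va' e => e1.
    have k1 : k = one.
      have h1 : mul i k = i by rewrite -[LHS]m1r -(mV i) mA -(mA i) e1 m1.
      by have := congr1 (mul (inv i)) h1; rewrite mA mV m1.
    by rewrite ek k1 A1.
  + apply/seteqP; split => y.
    * by move=> [a /= Va <-]; exists (A a (inv i)) => //; exact: PA.
    * move=> [v Vv <-]; exists (A v i); last exact: PA.
      by rewrite /= AKV.
  + move=> W oW; apply: oP; apply: openI => //.
    apply: open_comp => //; move=> y _; exact: cA.
Qed.

Theorem proposition2p2p12
  (R : realType)
  (G1 G2 : discreteTopologicalType)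
  (mul1 : G1 -> G1 -> G1) (one1 : G1) (inv1 : G1 -> G1)
  (mul2 : G2 -> G2 -> G2) (one2 : G2) (inv2 : G2 -> G2)
  (X1 X2 B : pseudoMetricType R)
  (act1 : G1 -> X1 -> X1) (act2 : G2 -> X2 -> X2)
  (P1 : B -> X1) (P2 : B -> X2)
  (L : G1 -> B -> B) (Rt : B -> G2 -> B) :
  is_group mul1 one1 inv1 -> is_group mul2 one2 inv2 ->
  hausdorff_space X1 -> locally_compact [set: X1] ->
  hausdorff_space X2 -> locally_compact [set: X2] ->
  hausdorff_space B -> locally_compact [set: B] ->
  action_by_homeos mul1 one1 act1 -> action_by_homeos mul2 one2 act2 ->
  action_groupoid_equivalence mul1 one1 act1 mul2 one2 inv2 act2 P1 P2 L Rt ->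
  covering_map P1 /\ covering_map P2.
Proof.
move=> g1 g2 _ _ _ _ hB lcB _ _.
move=> [[cP1 oP1 cP2 oP2] [[cL _ LL L1] frL prL] [[cR _ RR R1] frR prR]
        [_ P2L P1R] [sP1 fib1 sP2 fib2]].
split.
- apply: (@cover_gen G2 B X1 mul2 one2 inv2 P1 Rt) => //.
  move=> C cC.
  have cS := prR _ (compact_setX cC cC).
  have -> : [set k | exists b, C b /\ C (Rt b k)] =
     snd @` [set bk : B * G2 | (C `*` C) (bk.1, Rt bk.1 bk.2)].
    apply/seteqP; split => k.
    + by move=> [b [Cb Cbk]]; exists (b, k).
    + by move=> [[b k'] /= [Cb Cbk] <-]; exists b.
  apply: continuous_compact => //; apply: continuous_subspaceT.
  by move=> [? ?]; exact: cvg_snd.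
- have [mA m1 m1r mV mVr] := g1.
  apply: (@cover_gen G1 B X2 (fun a c => mul1 c a) one1 inv1 P2 (fun b g => L g b)) => //.
  + by split => // a b c; rewrite mA.
  + by move=> b k /frL.
  + move=> C cC.
    have cS := prL _ (compact_setX cC cC).
    have -> : [set k | exists b, C b /\ C (L k b)] =
       fst @` [set gb : G1 * B | (C `*` C) (L gb.1 gb.2, gb.2)].
      apply/seteqP; split => k.
      * by move=> [b [Cb Cbk]]; exists (k, b).
      * by move=> [[k' b] /= [Cbk Cb] <-]; exists b.
    apply: continuous_compact => //; apply: continuous_subspaceT.
    by move=> [? ?]; exact: cvg_fst.
Qed.
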